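(* For every $i\in\{1,2,3,4\}$, every unit ball $b$ and every configuration $\sigma_b$ on $b$ belonging to the class $\mathcal{C}_i$, there exists a periodic configuration $\varphi:V\to\{-1,1\}$ with period not exceeding 2 such that $\varphi_{b'}\in\mathcal{C}_i$ for every unit ball $b'$ and $\varphi_b=\sigma_b$.
   Context: Let $G_2$ be the free product of three cyclic groups of order two with generators $a_1,a_2,a_3$; its elements are the vertices $V$ of the Cayley tree of order 2, with $g,h$ adjacent iff $h=ga_i$ for some $i$, and $d$ the graph distance. A configuration $\varphi:V\to\{-1,1\}$ is periodic with period not exceeding 2 if there is a subgroup $G^*\subset G_2$ of index at most 2 such that $\varphi(gh)=\varphi(h)$ for all $g\in G^*$, $h\in G_2$. A unit ball is $b=\{y: d(x,y)\le1\}$ (center $x$ and its three neighbours, the leaves); $\varphi_b$ denotes the restriction to $b$. A configuration on a unit ball belongs to $\mathcal{C}_1$, $\mathcal{C}_2$, $\mathcal{C}_4$, $\mathcal{C}_3$ according as exactly $3$, $2$, $1$, $0$ of its leaves carry the same value as its center. *)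

(* Defs.v *)
From mathcomp Require Import all_boot.
Set Implicit Arguments. Unset Strict Implicit. Unset Printing Implicit Defensive.

(* Elements of G_2 = Z/2 * Z/2 * Z/2 are reduced words over the generators
   a_1,a_2,a_3 (indexed by 'I_3): no two consecutive letters are equal. *)
Definition word := seq 'I_3.

Definition reduced (w : word) : bool := sorted (fun a b : 'I_3 => a != b) w.

(* free reduction, with a stack kept in reversed order *)
Definition push (st : word) (a : 'I_3) : word :=
  match st with
  | b :: st' => if b == a then st' else a :: st
  | [::] => [:: a]
  end.

Definition red (w : word) : word := rev (foldl push [::] w).

Definition gmul (u v : word) : word := red (u ++ v).
Definition ginv (u : word) : word := rev u.

Definition is_subgroup (H : pred word) : Prop :=
  (forall g, H g -> reduced g) /\ H [::] /\
  (forall g h, H g -> H h -> H (gmul g h)) /\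
  (forall g, H g -> H (ginv g)).

(* index at most 2: G_2 is covered by at most two right cosets H and H c *)
Definition index_le2 (H : pred word) : Prop :=
  exists c, reduced c /\ forall g, reduced g -> H g \/ H (gmul g (ginv c)).

(* configurations take values in {-1,1}, encoded as bool (true = 1, false = -1) *)
Definition periodic_le2 (phi : word -> bool) : Prop :=
  exists H : pred word, is_subgroup H /\ index_le2 H /\
    forall g h, H g -> reduced h -> phi (gmul g h) = phi h.

(* class index of a configuration on a unit ball with center value c and
   leaf values l j (leaf j is x a_j): C_1,C_2,C_4,C_3 for 3,2,1,0 agreeing leaves *)
Definition ball_class (c : bool) (l : 'I_3 -> bool) : nat :=
  match #|[pred j | l j == c]| with
  | 3 => 1
  | 2 => 2
  | 1 => 4
  | _ => 3
  end.

(* Main.v *)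
Require Import Defs.
From mathcomp Require Import all_boot.

Section Aux.
Variable S : pred 'I_3.

Lemma count_push st a : odd (count S (push st a)) = odd (count S st + S a).
Proof.
case: st => [|b st] /=; first by rewrite addn0.
case: eqP => [->|_] /=; last by rewrite addnC.
by rewrite !oddD addbAC addbb.
Qed.

Lemma count_foldl w st : odd (count S (foldl push st w)) = odd (count S st + count S w).
Proof.
elim: w st => [|a w IH] st /=; first by rewrite addn0.
by rewrite IH !oddD count_push oddD addbA.
Qed.

Lemma count_red w : odd (count S (red w)) = odd (count S w).
Proof. by rewrite /red count_rev count_foldl. Qed.

Lemma count_gmul u v : odd (count S (gmul u v)) = odd (count S u) (+) odd (count S v).
Proof. by rewrite /gmul count_red count_cat oddD. Qed.
End Aux.

Lemma sorted_push st a : sorted (fun a b : 'I_3 => a != b) st ->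
  sorted (fun a b : 'I_3 => a != b) (push st a).
Proof.
case: st => [|b st] //=.
case: eqP => [_|/eqP ne] /=.
  by case: st => //= ? ? /andP[].
by move=> ->; rewrite eq_sym ne.
Qed.

Lemma sorted_foldl w st : sorted (fun a b : 'I_3 => a != b) st ->
  sorted (fun a b : 'I_3 => a != b) (foldl push st w).
Proof. by elim: w st => [|a w IH] st //= H; apply: IH; apply: sorted_push. Qed.

Lemma reduced_rev w : reduced w -> reduced (rev w).
Proof.
rewrite /reduced rev_sorted.
by apply: sub_sorted => a b /=; rewrite eq_sym.
Qed.

Lemma reduced_red w : reduced (red w).
Proof. by apply: reduced_rev; apply: sorted_foldl. Qed.

Theorem lemma3p2 (i : nat) (Hi : (1 <= i <= 4)%N) (x : word) (Hx : reduced x)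
  (c : bool) (l : 'I_3 -> bool) (Hcl : ball_class c l = i) :
  exists phi : word -> bool,
    periodic_le2 phi /\
    (forall y, reduced y -> ball_class (phi y) (fun j => phi (gmul y [:: j])) = i) /\
    phi x = c /\ (forall j, phi (gmul x [:: j]) = l j).
Proof.
pose S : pred 'I_3 := fun j => l j != c.
pose e w := odd (count S w).
exists (fun w => (c (+) e x) (+) e w).
split; last split; last split.
- exists (fun g => reduced g && ~~ e g).
  split; last split.
  + split; first by move=> g /andP[].
    split; first by [].
    split.
      move=> g h /andP[_ Hg] /andP[_ Hh]; rewrite reduced_red /e count_gmul.
      by move: Hg Hh; rewrite /e => /negbTE -> /negbTE ->.
    move=> g /andP[Hg Hg']; rewrite /ginv reduced_rev //= /e count_rev //.
  + case: (boolP [exists j, S j]) => [/existsP[j Sj]|/existsPn nS].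
      exists [:: j]; split => // g Hg.
      case Eg: (e g); [right|left]; last by rewrite Hg.
      rewrite reduced_red /e count_gmul /ginv /= Sj.
      by move: Eg; rewrite /e => ->.
    exists [::]; split => // g Hg; left; rewrite Hg /e.
    by rewrite (@eq_in_count _ _ pred0) ?count_pred0 // => a _; apply/negbTE/nS.
  + move=> g h /andP[_ Hg] _; rewrite /e count_gmul.
    by move: Hg; rewrite /e => /negbTE ->.
- move=> y _; rewrite -Hcl /ball_class.
  have -> : #|[pred j | (c (+) e x) (+) e (gmul y [:: j]) == (c (+) e x) (+) e y]|
          = #|[pred j | l j == c]|.
    apply: eq_card => j; rewrite !inE /e count_gmul /= addn0 /S.
    case: (odd (count _ x)); case: (odd (count _ y)); case: (l j) => /=; by case: (c).
  by [].
- by rewrite -addbA addbb addbF.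
- move=> j; rewrite /e count_gmul /= addn0 /S.
  case: (odd (count _ x)); case: (l j) => /=; by case: (c).
Qed.
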